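(* Let $Y$ be a non-negative integer-valued random variable with finite second moment. For $t\ge 0$ let $m_Y(t)=\mathbb{E}[Y-t\mid Y>t]$ (defined when $\mathbb{P}(Y>t)>0$). If \[ m_Y(t)\ge \mathbb{E}[Y]+\tfrac12\quad\text{for all } t\ge 0, \] then $\sqrt{\tfrac12\mathbb{E}[Y^2]}\ge\mathbb{E}[Y]$. Likewise, if $m_Y(t)\le\mathbb{E}[Y]+\tfrac12$ for all $t\ge0$, then $\sqrt{\tfrac12\mathbb{E}[Y^2]}\le\mathbb{E}[Y]$.
   Context: In the discrete setting the mean excess function is the genuine conditional expectation, so $m_Y(0)=\mathbb{E}[Y\mid Y>0]\ge\mathbb{E}[Y]$. *)

(* Defs.v *)
From Stdlib Require Import Reals.
From Coquelicot Require Import Coquelicot.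
Open Scope R_scope.

(* A non-negative integer-valued random variable Y is described by its law:
   p n = P(Y = n). *)
Definition is_pmf (p : nat -> R) : Prop :=
  (forall n, 0 <= p n) /\ is_series p 1.

Definition finite_second_moment (p : nat -> R) : Prop :=
  ex_series (fun n => (INR n) ^ 2 * p n).

Definition mean (p : nat -> R) : R := Series (fun n => INR n * p n).

Definition second_moment (p : nat -> R) : R :=
  Series (fun n => (INR n) ^ 2 * p n).

Definition tail_prob (p : nat -> R) (t : R) : R :=
  Series (fun n => if Rlt_dec t (INR n) then p n else 0).

(* m_Y(t) = E[Y - t | Y > t] = E[(Y - t) 1_{Y>t}] / P(Y > t)
   (meaningful when P(Y > t) > 0) *)
Definition mean_excess (p : nat -> R) (t : R) : R :=
  Series (fun n => if Rlt_dec t (INR n) then (INR n - t) * p n else 0)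
  / tail_prob p t.

(* Main.v *)
Require Import Defs.
From Stdlib Require Import Reals Lra Lia.
From Coquelicot Require Import Coquelicot.
Open Scope R_scope.

Definition E (p : nat -> R) (f : nat -> R) := Series (fun n => f n * p n).
Definition good (f : nat -> R) := exists A, forall n, Rabs (f n) <= A * (INR n ^ 2 + 1).

Lemma Series_zero : Series (fun _ => 0) = 0.
Proof.
  rewrite (Series_ext (fun _ => 0) (fun n => 0 * (fun _ => 0) n)).
  rewrite Series_scal_l; ring. intros; simpl; ring.
Qed.

Lemma ex_plus (a b : nat -> R) : ex_series a -> ex_series b -> ex_series (fun n => a n + b n).
Proof. intros Ha Hb. exact (ex_series_plus a b Ha Hb). Qed.

Lemma ex_scal (c : R) (a : nat -> R) : ex_series a -> ex_series (fun n => c * a n).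
Proof. intros Ha. exact (ex_series_scal_l c a Ha). Qed.

Lemma ex_good p f : is_pmf p -> finite_second_moment p -> good f ->
  ex_series (fun n => f n * p n).
Proof.
  intros [Hp0 Hp1] H2 [A HA].
  apply (@ex_series_le R_AbsRing R_CompleteNormedModule _ (fun n => A * (INR n ^ 2 * p n + p n))).
  - intros n. change (norm (f n * p n)) with (Rabs (f n * p n)).
    rewrite Rabs_mult, (Rabs_right (p n)) by (apply Rle_ge; auto).
    specialize (HA n). specialize (Hp0 n).
    replace (A * (INR n ^ 2 * p n + p n)) with (A * (INR n ^ 2 + 1) * p n) by ring.
    apply Rmult_le_compat_r; auto.
  - apply ex_scal, ex_plus; [exact H2 | exists 1; exact Hp1].
Qed.
Lemma bump_sum (v : R) (j n : nat) :
  sum_f_R0 (fun k => if Nat.eq_dec k j then v else 0) n = if Compare_dec.le_lt_dec j n then v else 0.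
Proof.
  induction n as [|n IH].
  - unfold sum_f_R0; cbv beta. destruct (Nat.eq_dec 0 j); destruct (Compare_dec.le_lt_dec j 0); try lia; auto.
  - rewrite tech5, IH. destruct (Nat.eq_dec (S n) j) as [e|e];
    destruct (Compare_dec.le_lt_dec j n); destruct (Compare_dec.le_lt_dec j (S n)); try lia; ring.
Qed.

Lemma bump_series (v : R) (j : nat) :
  is_series (fun k => if Nat.eq_dec k j then v else 0) v.
Proof.
  apply is_series_Reals. intros eps Heps. exists j. intros n Hn.
  rewrite bump_sum. destruct (Compare_dec.le_lt_dec j n); try lia.
  unfold Rdist. rewrite Rminus_diag, Rabs_R0. exact Heps.
Qed.

Lemma good_bound f A : (forall n, Rabs (f n) <= A * (INR n ^ 2 + 1)) -> good f.
Proof. intros H; exists A; exact H. Qed.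

Lemma good_plus f g : good f -> good g -> good (fun n => f n + g n).
Proof.
  intros [A HA] [B HB]; exists (A + B); intros n.
  eapply Rle_trans; [apply Rabs_triang|]. specialize (HA n); specialize (HB n); lra.
Qed.

Lemma good_scal c f : good f -> good (fun n => c * f n).
Proof.
  intros [A HA]; exists (Rabs c * A); intros n.
  rewrite Rabs_mult, Rmult_assoc. apply Rmult_le_compat_l; [apply Rabs_pos|auto].
Qed.

Lemma E_plus p f g : is_pmf p -> finite_second_moment p -> good f -> good g ->
  E p (fun n => f n + g n) = E p f + E p g.
Proof.
  intros Hp H2 Hf Hg; unfold E.
  rewrite <- Series_plus by (apply ex_good; auto).
  apply Series_ext; intros; ring.
Qed.

Lemma E_scal p c f : E p (fun n => c * f n) = c * E p f.
Proof.
  unfold E. rewrite <- Series_scal_l. apply Series_ext; intros; ring.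
Qed.

Lemma E_le p f g : is_pmf p -> finite_second_moment p -> good f -> good g ->
  (forall n, f n <= g n) -> E p f <= E p g.
Proof.
  intros Hp H2 Hf Hg Hfg; unfold E.
  assert (0 <= Series (fun n => g n * p n - f n * p n)).
  { rewrite <- Series_zero. apply Series_le.
    - intros n; split; [lra|]. destruct Hp as [Hp0 _]. specialize (Hp0 n); specialize (Hfg n); nra.
    - apply (ex_series_minus (V:=R_NormedModule)); apply ex_good; auto. }
  rewrite Series_minus in H by (apply ex_good; auto). lra.
Qed.

Lemma E_term p f j : is_pmf p -> finite_second_moment p -> good f ->
  (forall n, 0 <= f n) -> f j * p j <= E p f.
Proof.
  intros Hp H2 Hf Hf0.
  set (b := fun n => if Nat.eq_dec n j then f j * p j else 0).
  assert (Hb : Series b = f j * p j).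
  { apply is_series_unique, bump_series. }
  rewrite <- Hb. unfold E. apply Series_le.
  - intros n; unfold b; destruct (Nat.eq_dec n j).
    + rewrite e; destruct Hp as [Hp0 _]; specialize (Hp0 j); specialize (Hf0 j); nra.
    + destruct Hp as [Hp0 _]; specialize (Hp0 n); specialize (Hf0 n); nra.
  - apply ex_good; auto.
Qed.

Definition ind (K n : nat) : R := if Rlt_dec (INR K) (INR n) then 1 else 0.
Definition pos (K n : nat) : R := if Rlt_dec (INR K) (INR n) then INR n - INR K else 0.
Definition hh (K n : nat) : R :=
  if Rlt_dec (INR K) (INR n) then (INR n - INR K) * (INR n - INR K + 1) / 2 else 0.
Definition qq (K n : nat) : R := if Rlt_dec (INR K) (INR n) then INR n ^ 2 else 0.
Fixpoint gg (K n : nat) : R := match K with O => 0 | S K' => gg K' n + pos K' n end.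
Fixpoint mm (K n : nat) : R := match K with O => 0 | S K' => mm K' n + ind K' n end.
Definition xx (n : nat) : R := / 2 * (INR n ^ 2 + INR n).

Lemma Rlt_nat K n : INR K < INR n -> (K < n)%nat.
Proof. apply INR_lt. Qed.
Lemma nRlt_nat K n : ~ INR K < INR n -> (n <= K)%nat.
Proof. intros H. destruct (Compare_dec.le_lt_dec n K); auto. exfalso; apply H, lt_INR; auto. Qed.

Ltac cases K n := unfold ind, pos, hh, qq;
  destruct (Rlt_dec (INR K) (INR n)) as [?H|?H];
  [apply Rlt_nat in H | apply nRlt_nat in H].

Lemma gg_eq K n : gg K n = xx n - hh K n.
Proof.
  induction K as [|K IH].
  - simpl. unfold xx, hh. destruct (Rlt_dec (INR 0) (INR n)) as [H|H]; simpl; [field|].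
    apply nRlt_nat in H. replace n with 0%nat by lia. simpl; field.
  - simpl gg. rewrite IH. unfold hh, pos.
    destruct (Rlt_dec (INR K) (INR n)) as [H|H]; destruct (Rlt_dec (INR (S K)) (INR n)) as [H'|H'].
    + rewrite S_INR; field.
    + apply Rlt_nat in H; apply nRlt_nat in H'. replace n with (S K) by lia. rewrite S_INR; field.
    + apply nRlt_nat in H; apply Rlt_nat in H'. lia.
    + ring.
Qed.

Lemma mm_eq K n : mm K n = INR n - pos K n.
Proof.
  induction K as [|K IH].
  - simpl. unfold pos. destruct (Rlt_dec (INR 0) (INR n)) as [H|H]; simpl; [ring|].
    apply nRlt_nat in H. replace n with 0%nat by lia. simpl; ring.
  - simpl mm. rewrite IH. unfold ind, pos.
    destruct (Rlt_dec (INR K) (INR n)) as [H|H]; destruct (Rlt_dec (INR (S K)) (INR n)) as [H'|H'].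
    + rewrite S_INR; ring.
    + apply Rlt_nat in H; apply nRlt_nat in H'. replace n with (S K) by lia. rewrite S_INR; ring.
    + apply nRlt_nat in H; apply Rlt_nat in H'. lia.
    + ring.
Qed.

Lemma hh_bound K n : 0 <= hh K n <= qq K n.
Proof.
  unfold hh, qq. destruct (Rlt_dec (INR K) (INR n)) as [H|H]; [|lra].
  pose proof (pos_INR K). apply Rlt_nat in H.
  assert (INR (S K) <= INR n) by (apply le_INR; lia). rewrite S_INR in H1. nra.
Qed.

Lemma pos_bound K n : 0 <= pos K n <= qq K n.
Proof.
  unfold pos, qq. destruct (Rlt_dec (INR K) (INR n)) as [H|H]; [|lra].
  pose proof (pos_INR K). apply Rlt_nat in H.
  assert (INR (S K) <= INR n) by (apply le_INR; lia). rewrite S_INR in H1. nra.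
Qed.

Lemma ind_bound K n : 0 <= ind K n <= 1.
Proof. unfold ind. destruct (Rlt_dec (INR K) (INR n)); lra. Qed.

Lemma sq_bound n : INR n <= INR n ^ 2 + 1.
Proof. pose proof (pos_INR n). nra. Qed.

Lemma good_nonneg f A : (forall n, 0 <= f n <= A * (INR n ^ 2 + 1)) -> good f.
Proof. intros H; exists A; intros n; rewrite Rabs_right by (apply Rle_ge; apply H); apply H. Qed.

Lemma good_qq K : good (qq K).
Proof. apply (good_nonneg _ 1). intros n; unfold qq; destruct (Rlt_dec (INR K) (INR n)); nra. Qed.
Lemma good_hh K : good (hh K).
Proof. apply (good_nonneg _ 1). intros n; pose proof (hh_bound K n); pose proof (good_qq K).
  unfold qq in *. destruct (Rlt_dec (INR K) (INR n)); nra. Qed.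
Lemma good_pos K : good (pos K).
Proof. apply (good_nonneg _ 1). intros n; pose proof (pos_bound K n).
  unfold qq in *. destruct (Rlt_dec (INR K) (INR n)); nra. Qed.
Lemma good_ind K : good (ind K).
Proof. apply (good_nonneg _ 1). intros n; pose proof (ind_bound K n). pose proof (pos_INR n). nra. Qed.
Lemma good_id : good INR.
Proof. apply (good_nonneg _ 1). intros n; pose proof (sq_bound n). pose proof (pos_INR n). nra. Qed.
Lemma good_sq : good (fun n => INR n ^ 2).
Proof. apply (good_nonneg _ 1). intros n; pose proof (pos_INR n). nra. Qed.
Lemma good_xx : good xx.
Proof. unfold xx. apply good_scal, good_plus; [apply good_sq|apply good_id]. Qed.
Lemma good_gg K : good (gg K).
Proof. induction K; simpl. apply (good_nonneg _ 0); intros; lra. apply good_plus; auto; apply good_pos. Qed.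
Lemma good_mm K : good (mm K).
Proof. induction K; simpl. apply (good_nonneg _ 0); intros; lra. apply good_plus; auto; apply good_ind. Qed.

Lemma tail_small p : is_pmf p -> finite_second_moment p ->
  forall eps, 0 < eps -> exists K, E p (qq K) < eps.
Proof.
  intros Hp H2 eps Heps.
  set (a := fun n => INR n ^ 2 * p n).
  assert (HE : forall K, E p (qq K) = Series a - sum_f_R0 a K).
  { intros K. unfold E.
    rewrite (Series_incr_n_aux _ (S K)).
    2:{ intros k Hk. unfold qq. destruct (Rlt_dec (INR K) (INR k)) as [H|H]; [|ring].
        apply Rlt_nat in H; lia. }
    rewrite (Series_incr_n a (S K)) by (lia || exact H2). simpl Init.Nat.pred.
    rewrite (Series_ext _ (fun k => a (S K + k)%nat)). ring.
    intros k. unfold qq, a. destruct (Rlt_dec (INR K) (INR (S K + k))) as [H|H]; [ring|].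
    apply nRlt_nat in H; lia. }
  pose proof (Series_correct a H2) as Hs. apply is_series_Reals in Hs.
  destruct (Hs eps Heps) as [N HN]. exists N. rewrite HE.
  specialize (HN N (Nat.le_refl N)). unfold Rdist in HN.
  apply Rabs_def2 in HN. lra.
Qed.

Lemma E_ext p f g : (forall n, f n = g n) -> E p f = E p g.
Proof. intros H; unfold E; apply Series_ext; intros; rewrite H; reflexivity. Qed.

Lemma E_zero p : E p (fun _ => 0) = 0.
Proof. unfold E. rewrite (Series_ext _ (fun _ => 0)) by (intros; ring). apply Series_zero. Qed.

Lemma E_sub p f g : is_pmf p -> finite_second_moment p -> good f -> good g ->
  E p (fun n => f n - g n) = E p f - E p g.
Proof.
  intros Hp H2 Hf Hg.
  rewrite (E_ext p _ (fun n => f n + (-1) * g n)) by (intros; ring).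
  rewrite E_plus, E_scal; auto; [ring|apply good_scal; auto].
Qed.

Lemma E_nonneg p f : is_pmf p -> finite_second_moment p -> good f ->
  (forall n, 0 <= f n) -> 0 <= E p f.
Proof.
  intros Hp H2 Hf H. rewrite <- (E_zero p). apply E_le; auto.
  apply (good_nonneg _ 0); intros; lra.
Qed.


Lemma setup p : is_pmf p -> finite_second_moment p ->
  let mu := E p INR in let M2 := E p (fun n => INR n ^ 2) in
  0 <= mu /\ 0 <= M2 /\
  (forall K, E p (gg K) = / 2 * (M2 + mu) - E p (hh K)) /\
  (forall K, E p (mm K) = mu - E p (pos K)) /\
  (forall K, 0 <= E p (hh K) <= E p (qq K)) /\
  (forall K, 0 <= E p (pos K) <= E p (qq K)).
Proof.
  intros Hp H2 mu M2.
  split; [apply E_nonneg; auto; [apply good_id|apply pos_INR]|].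
  split; [apply E_nonneg; auto; [apply good_sq|intros n; pose proof (pos_INR n); nra]|].
  split; [|split; [|split]].
  - intros K. rewrite (E_ext p _ _ (gg_eq K)), E_sub; auto; try apply good_xx; try apply good_hh.
    unfold xx. rewrite E_scal, E_plus; auto; [apply good_sq|apply good_id].
  - intros K. rewrite (E_ext p _ _ (mm_eq K)), E_sub; auto; [apply good_id|apply good_pos].
  - intros K; split; [apply E_nonneg|apply E_le]; auto; try apply good_hh; try apply good_qq;
      intros n; apply hh_bound.
  - intros K; split; [apply E_nonneg|apply E_le]; auto; try apply good_pos; try apply good_qq;
      intros n; apply pos_bound.
Qed.

Lemma tail_eq p K : tail_prob p (INR K) = E p (ind K).
Proof. unfold tail_prob, E. apply Series_ext; intros n; unfold ind.
  destruct (Rlt_dec (INR K) (INR n)); ring. Qed.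

Lemma excess_eq p K : mean_excess p (INR K) = E p (pos K) / E p (ind K).
Proof. unfold mean_excess. rewrite tail_eq. f_equal. unfold E. apply Series_ext; intros n; unfold pos.
  destruct (Rlt_dec (INR K) (INR n)); ring. Qed.

Lemma ind_E_nonneg p K : is_pmf p -> finite_second_moment p -> 0 <= E p (ind K).
Proof. intros; apply E_nonneg; auto; [apply good_ind|intros; apply ind_bound]. Qed.

Lemma mean_E p : mean p = E p INR.
Proof. reflexivity. Qed.
Lemma sm_E p : second_moment p = E p (fun n => INR n ^ 2).
Proof. reflexivity. Qed.

Lemma gg0 p : E p (gg 0) = 0.
Proof. rewrite <- (E_zero p). apply E_ext; reflexivity. Qed.
Lemma mm0 p : E p (mm 0) = 0.
Proof. rewrite <- (E_zero p). apply E_ext; reflexivity. Qed.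
Lemma ggS p K : is_pmf p -> finite_second_moment p -> E p (gg (S K)) = E p (gg K) + E p (pos K).
Proof. intros. change (E p (fun n => gg K n + pos K n) = E p (gg K) + E p (pos K)).
  apply E_plus; auto; [apply good_gg|apply good_pos]. Qed.
Lemma mmS p K : is_pmf p -> finite_second_moment p -> E p (mm (S K)) = E p (mm K) + E p (ind K).
Proof. intros. change (E p (fun n => mm K n + ind K n) = E p (mm K) + E p (ind K)).
  apply E_plus; auto; [apply good_mm|apply good_ind]. Qed.

Theorem proposition10 (p : nat -> R) (Hp : is_pmf p)
  (H2 : finite_second_moment p) :
  ((forall t : R, 0 <= t -> 0 < tail_prob p t ->
       mean p + 1 / 2 <= mean_excess p t) ->
     mean p <= sqrt (second_moment p / 2))
  /\
  ((forall t : R, 0 <= t -> 0 < tail_prob p t ->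
       mean_excess p t <= mean p + 1 / 2) ->
     sqrt (second_moment p / 2) <= mean p).
Proof.
  rewrite sm_E, mean_E.
  destruct (setup p Hp H2) as (Hmu & HM2 & Hgg & Hmm & Hhh & Hpos).
  set (mu := E p INR) in *. set (M2 := E p (fun n => INR n ^ 2)) in *.
  pose proof (tail_small p Hp H2) as Htail.
  assert (Hsq : mu = sqrt (mu ^ 2)) by (rewrite sqrt_pow2; auto).
  split; intros Hc.
  - assert (key : forall K, (mu + 1/2) * E p (ind K) <= E p (pos K)).
    { intros K. pose proof (ind_E_nonneg p K Hp H2) as HT.
      destruct (Rlt_dec 0 (E p (ind K))) as [HT'|HT'].
      + specialize (Hc (INR K) (pos_INR K)). rewrite tail_eq, excess_eq in Hc.
        specialize (Hc HT').
        apply (Rmult_le_compat_r (E p (ind K))) in Hc; [|lra].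
        replace (E p (pos K) / E p (ind K) * E p (ind K)) with (E p (pos K)) in Hc by (field; lra).
        exact Hc.
      + replace (E p (ind K)) with 0 by lra. specialize (Hpos K). lra. }
    assert (ind : forall K, (mu + 1/2) * E p (mm K) <= E p (gg K)).
    { induction K. rewrite gg0, mm0; lra.
      rewrite ggS, mmS by auto. specialize (key K). lra. }
    assert (HX : (mu + 1/2) * mu <= / 2 * (M2 + mu)).
    { apply Rnot_lt_le; intros Hlt.
      destruct (Htail (((mu + 1/2) * mu - / 2 * (M2 + mu)) / (mu + 1/2))) as [K HK].
      { apply Rdiv_lt_0_compat; lra. }
      specialize (ind K). rewrite Hgg, Hmm in ind. specialize (Hhh K). specialize (Hpos K).
      apply (Rmult_lt_compat_l (mu + 1/2)) in HK; [|lra].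
      replace ((mu + 1 / 2) * (((mu + 1 / 2) * mu - / 2 * (M2 + mu)) / (mu + 1 / 2)))
        with ((mu + 1 / 2) * mu - / 2 * (M2 + mu)) in HK by (field; lra).
      nra. }
    rewrite Hsq. apply sqrt_le_1_alt. nra.
  - assert (key : forall K, E p (pos K) <= (mu + 1/2) * E p (ind K)).
    { intros K. pose proof (ind_E_nonneg p K Hp H2) as HT.
      destruct (Rlt_dec 0 (E p (ind K))) as [HT'|HT'].
      + specialize (Hc (INR K) (pos_INR K)). rewrite tail_eq, excess_eq in Hc.
        specialize (Hc HT').
        apply (Rmult_le_compat_r (E p (ind K))) in Hc; [|lra].
        replace (E p (pos K) / E p (ind K) * E p (ind K)) with (E p (pos K)) in Hc by (field; lra).
        exact Hc.
      + assert (HT0 : E p (ind K) = 0) by lra.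
        assert (Hz : E p (pos K) = 0).
        { rewrite <- (E_zero p). unfold E. apply Series_ext. intros n.
          pose proof (E_term p (ind K) n Hp H2 (good_ind K) (fun m => proj1 (ind_bound K m))) as Ht.
          rewrite HT0 in Ht. destruct Hp as [Hp0 _]. specialize (Hp0 n).
          revert Ht. unfold pos, ind. destruct (Rlt_dec (INR K) (INR n)); intros; [|ring].
          replace (p n) with 0 by lra. ring. }
        rewrite Hz, HT0. lra. }
    assert (ind : forall K, E p (gg K) <= (mu + 1/2) * E p (mm K)).
    { induction K. rewrite gg0, mm0; lra.
      rewrite ggS, mmS by auto. specialize (key K). lra. }
    assert (HX : / 2 * (M2 + mu) <= (mu + 1/2) * mu).
    { apply Rnot_lt_le; intros Hlt.
      destruct (Htail (/ 2 * (M2 + mu) - (mu + 1/2) * mu)) as [K HK]; [lra|].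
      specialize (ind K). rewrite Hgg, Hmm in ind. specialize (Hhh K). specialize (Hpos K).
      nra. }
    rewrite Hsq. apply sqrt_le_1_alt. nra.
Qed.
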